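(* For any nonzero circulant matrix $A\in\mathbb{R}_+^{n\times n}$, the sequence $\{(A/\lambda(A))^t\}_{t\ge1}$ of max-algebraic powers is ultimately periodic, and its transient satisfies $T(A)\le (n-1)^2+1$.
   Context: Max algebra on $\mathbb{R}_+$ with $\oplus=\max$ and ordinary product; $A^t$ is the max-algebraic power. A circulant matrix $\mathrm{Circ}(a_0,\dots,a_{n-1})$ has $A_{i,j}=a_t$ with $t\equiv j-i\pmod n$, $t\in\{0,\dots,n-1\}$. $\lambda(A)$ is the greatest max-algebraic eigenvalue (maximum cycle geometric mean). A sequence $\{\alpha_t\}$ is ultimately periodic if there are $T,\sigma$ with $\alpha_{t+\sigma}=\alpha_t$ for all $t\ge T$; the least such $T$ is the transient, denoted $T(A)$ for the sequence $\{(A/\lambda(A))^t\}$. *)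

(* Defs.v *)
(* Max algebra over the nonnegative elements of a real closed field R. *)
From HB Require Import structures.
From mathcomp Require Import all_boot all_order all_algebra.
Set Implicit Arguments. Unset Strict Implicit. Unset Printing Implicit Defensive.
Import Order.TTheory GRing.Theory Num.Theory.
Local Open Scope ring_scope.

Section MaxAlg.
Variable R : rcfType.

Definition mx_mul n (A B : 'M[R]_n) : 'M[R]_n :=
  \matrix_(i, j) \big[Num.max/0]_(k < n) (A i k * B k j).

Definition mx_id n : 'M[R]_n := \matrix_(i, j) (if i == j then 1 else 0).

Definition mx_pow n (A : 'M[R]_n) (t : nat) : 'M[R]_n := iter t (mx_mul A) (mx_id n).

Definition circ n (a : nat -> R) : 'M[R]_n :=
  \matrix_(i, j) a (((j + n - i) %% n)%N).

(* weight of the cycle x -> s_1 -> ... -> s_k -> x *)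
Definition cycle_weight n (A : 'M[R]_n) (x : 'I_n) (s : seq 'I_n) : R :=
  \prod_(p <- zip (x :: s) (rcons s x)) A p.1 p.2.

(* lam is the maximum cycle geometric mean of A (elementary cycles x :: s),
   i.e. lam = max over cycles c of w(c)^(1/|c|), written out without roots. *)
Definition is_max_cycle_mean n (A : 'M[R]_n) (lam : R) : Prop :=
  0 <= lam /\
  (forall x s, uniq (x :: s) -> cycle_weight A x s <= lam ^+ (size s).+1) /\
  (exists x s, uniq (x :: s) /\ cycle_weight A x s = lam ^+ (size s).+1).

Definition periodic_from (T' : Type) (f : nat -> T') (T : nat) : Prop :=
  exists sigma : nat, (0 < sigma)%N /\ forall t, (T <= t)%N -> f (t + sigma)%N = f t.

Definition ult_periodic (T' : Type) (f : nat -> T') : Prop :=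
  exists T, (1 <= T)%N /\ periodic_from f T.

Definition is_transient (T' : Type) (f : nat -> T') (T : nat) : Prop :=
  (1 <= T)%N /\ periodic_from f T /\
  forall T2, (1 <= T2)%N -> periodic_from f T2 -> (T <= T2)%N.

End MaxAlg.

(* Main.v *)
Require Import Defs.
From HB Require Import structures.
From mathcomp Require Import all_boot all_order all_algebra.
From mathcomp Require Import zify.
Import Order.TTheory GRing.Theory Num.Theory.
Set Implicit Arguments. Unset Strict Implicit.
Local Open Scope ring_scope.

Lemma modstep (n i k : nat) : (i < n)%N -> (k < n)%N -> (((i + k) %% n + n - i) %% n)%N = k.
Proof.
move=> hi hk; case: (ltnP (i + k) n) => h.
  rewrite (modn_small h) (_ : (i + k + n - i = k + n)%N); last by lia.
  by rewrite modnDr modn_small.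
have -> : ((i + k) %% n = i + k - n)%N.
  rewrite -{1}(subnK h) modnDr modn_small //; lia.
rewrite (_ : (i + k - n + n - i = k)%N) ?modn_small //; lia.
Qed.

Lemma modback (n i k S : nat) : (i < n)%N ->
  ((i + ((k + n - i) %% n + S)) %% n = (k + S) %% n)%N.
Proof.
move=> hi; rewrite addnA -modnDml modnDmr.
rewrite (_ : (i + (k + n - i) = (k + S) + n - S)%N); last by lia.
rewrite (_ : ((k + S) + n - S = k + n)%N); last by lia.
by rewrite modnDml addnAC modnDr.
Qed.

Section Walk.
Variable R : rcfType.

Lemma le_bigmax n (F : 'I_n -> R) k : F k <= \big[Num.max/0]_(k < n) F k.
Proof. by rewrite (bigD1 k) //= le_max lexx. Qed.

Lemma bigmax_ge0 n (F : 'I_n -> R) : 0 <= \big[Num.max/0]_(k < n) F k.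
Proof. by apply: (big_rec (fun x => 0 <= x)) => // i x _ hx; rewrite le_max hx orbT. Qed.

Lemma bigmax_att n (F : 'I_n -> R) :
  \big[Num.max/0]_(k < n) F k = 0 \/ exists k, \big[Num.max/0]_(k < n) F k = F k.
Proof.
apply: (big_ind (fun x => x = 0 \/ exists k, x = F k)); [by left| |by move=> k _; right; exists k].
move=> x y hx hy; case: (leP x y) => _; by [].
Qed.

Lemma mx_pow_ge0 n (B : 'M[R]_n) : (forall i j, 0 <= B i j) ->
  forall t i j, 0 <= mx_pow B t i j.
Proof.
move=> hB; elim=> [|t IH] i j; first by rewrite /mx_pow /= mxE; case: eqP.
by rewrite /mx_pow iterS /mx_mul mxE bigmax_ge0.
Qed.

Variables (n : nat) (B : 'M[R]_n) (c : nat -> R).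
Hypothesis n0 : (0 < n)%N.
Hypothesis HB : forall i j : 'I_n, B i j = c ((j + n - i) %% n).
Hypothesis Hc : forall k, (k < n)%N -> 0 <= c k.

Lemma walk_up t (i j : 'I_n) :
  mx_pow B t i j = 0 \/ exists ks : seq 'I_n, size ks = t /\
    ((i + \sum_(k <- ks) (k : nat)) %% n = j)%N /\ mx_pow B t i j = \prod_(k <- ks) c k.
Proof.
elim: t i j => [|t IH] i j.
  rewrite /mx_pow /= mxE; case: eqP => [->|_]; last by left.
  right; exists [::]; split=> //; split; last by rewrite big_nil.
  by rewrite big_nil addn0 modn_small.
rewrite /mx_pow iterS -/(mx_pow B t) /mx_mul mxE.
case: (bigmax_att (fun k : 'I_n => B i k * mx_pow B t k j)) => [->|[k ->]]; first by left.
case: (IH k j) => [->|[ks0 [hs [hsum hp]]]]; first by left; rewrite mulr0.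
right; exists (Ordinal (ltn_pmod (k + n - i) n0) :: ks0); split; first by rewrite /= hs.
split; first by rewrite big_cons /= modback.
by rewrite big_cons /= hp HB.
Qed.

Lemma walk_lo (ks : seq 'I_n) (i j : 'I_n) :
  ((i + \sum_(k <- ks) (k : nat)) %% n = j)%N ->
  \prod_(k <- ks) c k <= mx_pow B (size ks) i j.
Proof.
elim: ks i => [|k0 ks IH] i.
  rewrite big_nil addn0 modn_small // => hij.
  have -> : i = j by apply: val_inj.
  by rewrite big_nil /mx_pow /= mxE eqxx.
rewrite big_cons => h.
pose v := Ordinal (ltn_pmod (i + k0) n0).
have hv : ((v + \sum_(k <- ks) (k : nat)) %% n = j)%N.
  by rewrite /= modnDml -addnA.
rewrite big_cons /mx_pow /= -/(mx_pow B (size ks)) /mx_mul mxE.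
apply: le_trans (le_bigmax _ v).
rewrite HB /= modstep //.
apply: ler_pM => //; first by apply: Hc.
  by apply: prodr_ge0 => k _; apply: Hc.
exact: IH.
Qed.

End Walk.

Lemma zip_iota (T : Type) (f : nat -> T) m d :
  zip (map f (iota m d)) (map f (iota m.+1 d)) = map (fun i => (f i, f i.+1)) (iota m d).
Proof. by elim: d m => [|d IH] m //=; rewrite IH. Qed.

Lemma count_sum n (s : seq 'I_n) : size s = (\sum_(g < n) count_mem g s)%N.
Proof.
elim: s => [|x s IH]; first by rewrite big1.
rewrite /= big_split /= -IH (bigD1 x) //= eqxx big1 ?add1n ?addn0 // => g hg.
by rewrite eq_sym (negbTE hg).
Qed.

Lemma filter_pred1 (T : eqType) (g : T) s : filter (pred1 g) s = nseq (count_mem g s) g.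
Proof. by elim: s => [|x s IH] //=; case: eqP => [->|] //=; rewrite IH. Qed.

Section Crit.
Variable R : rcfType.

Lemma prod_le (T : Type) (F : T -> R) lam (r : seq T) :
  (forall p, 0 <= F p <= lam) -> \prod_(p <- r) F p <= lam ^+ size r.
Proof.
move=> hF; elim: r => [|x r IH]; first by rewrite big_nil.
rewrite big_cons exprS; apply: ler_pM => //; first by case/andP: (hF x).
  by apply: prodr_ge0 => p _; case/andP: (hF p).
by case/andP: (hF x).
Qed.

Lemma crit_first (T : Type) (F : T -> R) lam x (r : seq T) :
  (forall p, 0 <= F p <= lam) -> 0 < lam ->
  \prod_(p <- x :: r) F p = lam ^+ (size r).+1 -> F x = lam.
Proof.
move=> hF hl; rewrite big_cons exprS => he.
have /andP [h0 h1] := hF x.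
apply/eqP; rewrite eq_le h1 /= leNgt; apply/negP => lt.
have hP := prod_le r hF.
have hP0 : 0 <= \prod_(p <- r) F p by apply: prodr_ge0 => p _; case/andP: (hF p).
have : F x * \prod_(p <- r) F p < lam * lam ^+ size r.
  apply: le_lt_trans (ler_wpM2l h0 hP) _.
  by rewrite ltr_pM2r // exprn_gt0.
by rewrite he ltxx.
Qed.

Lemma edge_le n (a : nat -> R) lam : (forall t, (t < n)%N -> 0 <= a t) -> 0 <= lam ->
  (forall x s, uniq (x :: s) -> cycle_weight (circ n a) x s <= lam ^+ (size s).+1) ->
  forall k, (k < n)%N -> a k <= lam.
Proof.
move=> ha hl hcyc k hk.
have n0 : (0 < n)%N by apply: leq_ltn_trans hk.
pose xf m : 'I_n := Ordinal (ltn_pmod (m * k) n0).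
pose P := fun m => (0 < m)%N && ((m * k) %% n == 0)%N.
have exP : exists m, P m by exists n; rewrite /P n0 /= -(modnMl k n) mulnC.
case: (ex_minnP exP) => d /andP [d0 /eqP dk] dmin.
case: d d0 dk dmin => [//|d'] _ dk dmin.
pose s := map xf (iota 1 d').
have hu : uniq (xf 0%N :: s).
  rewrite (_ : xf 0%N :: s = map xf (iota 0 d'.+1)) //.
  rewrite map_inj_in_uniq ?iota_uniq // => m1 m2; rewrite !mem_iota !add0n => h1 h2 /(congr1 val) /= he.
  wlog le12 : m1 m2 h1 h2 he / (m1 <= m2)%N.
    by move=> W; case: (leqP m1 m2) => h; [apply: W | apply/esym/W => //; apply: ltnW].
  apply/eqP; rewrite eqn_leq le12 /= leqNgt; apply/negP => lt.
  have : P (m2 - m1)%N.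
    rewrite /P subn_gt0 lt /= mulnBl.
    have := eqn_mod_dvd n (leq_mul le12 (leqnn k)); rewrite he eqxx.
    by move/esym; rewrite /dvdn.
  move/dmin; lia.
have := hcyc _ _ hu; rewrite /cycle_weight size_map size_iota.
rewrite (_ : xf 0%N :: s = map xf (iota 0 d'.+1)) //.
rewrite (_ : rcons s (xf 0%N) = map xf (iota 1 d'.+1)); last first.
  rewrite (_ : iota 1 d'.+1 = iota 1 d' ++ [:: d'.+1]); last by rewrite -[d'.+1]addn1 iotaD /= add1n addn1.
  rewrite map_cat cats1 /s; congr rcons; apply: val_inj => /=.
  by rewrite dk mul0n mod0n.
rewrite zip_iota big_map.
rewrite (eq_bigr (fun _ => a k)); last first.
  move=> m _; rewrite mxE /= mulSn (addnC k) -modnDml modstep //; exact: ltn_pmod.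
rewrite big_const_seq count_predT size_iota iter_mulr_1.
by rewrite ler_pXn2r // nnegrE ?ha.
Qed.

End Crit.

Section Main.
Variable R : rcfType.
Variables (n : nat) (B : 'M[R]_n) (c : nat -> R).
Hypothesis n0 : (0 < n)%N.
Hypothesis HB : forall i j : 'I_n, B i j = c ((j + n - i) %% n).
Hypothesis Hc : forall k, (k < n)%N -> 0 <= c k.
Hypothesis Hc1 : forall k, (k < n)%N -> c k <= 1.
Variable s0 : 'I_n.
Hypothesis Hs0 : c s0 = 1.

Lemma B_ge0 i j : 0 <= B i j.
Proof. by rewrite HB Hc // ltn_pmod. Qed.

Lemma period t : (n * n.-1 < t + n)%N -> mx_pow B (t + n) = mx_pow B t.
Proof.
move=> ht; apply/matrixP => i j; apply/le_anti/andP; split.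
  case: (walk_up n0 HB (t + n) i j) => [->|[ks [hs [hsum hp]]]].
    exact: mx_pow_ge0 B_ge0 _ _ _.
  have [g hg] : exists g : 'I_n, (n <= count_mem g ks)%N.
    case: (boolP [exists g : 'I_n, (n <= count_mem g ks)%N]) => [/existsP [g hg]|/existsPn hn].
      by exists g.
    have : (size ks <= n * n.-1)%N.
      rewrite count_sum; apply: leq_trans (_ : \sum_(g < n) n.-1 <= _)%N.
        by apply: leq_sum => g _; have := hn g; rewrite -ltnNge => h; rewrite -ltnS prednK.
      by rewrite sum_nat_const card_ord.
    by rewrite hs; lia.
  have hm : count_mem g ks = (n + (count_mem g ks - n))%N by rewrite subnKC.
  move: (count_mem g ks - n)%N hm => m hm.
  pose ks' := filter (predC (pred1 g)) ks ++ nseq m g.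
  have hperm : perm_eq ks (nseq n g ++ ks').
    rewrite -(perm_filterC (pred1 g)) filter_pred1 hm nseqD /ks'.
    by rewrite -!catA perm_cat2l perm_catC.
  have hsz : size ks' = t.
    by have := perm_size hperm; rewrite size_cat size_nseq hs; lia.
  rewrite hp; apply: le_trans (_ : \prod_(k <- ks') c k <= _).
    rewrite (perm_big _ hperm) big_cat big_nseq iter_mulr_1 /=.
    apply: ler_piMl; first by apply: prodr_ge0 => k _; apply: Hc.
    by apply: exprn_ile1; [apply: Hc | apply: Hc1].
  rewrite -hsz; apply: walk_lo => //.
  rewrite -hsum.
  have -> : \sum_(k <- ks) (k : nat) = (g * n + \sum_(k <- ks') (k : nat))%N.
    by rewrite (perm_big _ hperm) big_cat big_nseq iter_addn_0.
  by rewrite addnCA modnMDl.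
case: (walk_up n0 HB t i j) => [->|[ks [hs [hsum hp]]]].
  exact: mx_pow_ge0 B_ge0 _ _ _.
have hsz : size (ks ++ nseq n s0) = (t + n)%N by rewrite size_cat size_nseq hs.
rewrite hp -hsz; apply: (@le_trans _ _ (\prod_(k <- ks ++ nseq n s0) c k)).
  by rewrite big_cat /= big_nseq iter_mulr_1 Hs0 expr1n mulr1.
apply: walk_lo => //.
by rewrite big_cat /= big_nseq iter_addn_0 addnA addnC modnMDl.
Qed.

End Main.

Theorem proposition3 (R : rcfType) (n : nat) (a : nat -> R) (lam : R) :
  (forall t, (t < n)%N -> 0 <= a t) ->
  circ n a != 0 ->
  is_max_cycle_mean (circ n a) lam ->
  ult_periodic (fun t => mx_pow (lam^-1 *: circ n a) t) /\
  forall T, is_transient (fun t => mx_pow (lam^-1 *: circ n a) t) T ->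
    (T <= (n - 1) ^ 2 + 1)%N.
Proof.
move=> ha hnz [hl [hcyc [x [s [hu hw]]]]].
have n0 : (0 < n)%N.
  case: n a ha hnz hcyc x s hu hw => // a ha hnz.
  by case/negP: hnz; apply/eqP/matrixP => -[].
have hle := edge_le ha hl hcyc.
have lam0 : 0 < lam.
  rewrite lt0r hl andbT; apply/negP => /eqP l0.
  case/negP: hnz; apply/eqP/matrixP => i j; rewrite !mxE.
  apply/eqP; rewrite eq_le; apply/andP; split; [rewrite -l0; apply: hle | apply: ha]; exact: ltn_pmod.
have hF : forall p : 'I_n * 'I_n, 0 <= circ n a p.1 p.2 <= lam.
  by move=> p; rewrite mxE; apply/andP; split; [apply: ha | apply: hle]; exact: ltn_pmod.
have [p [r [hz hr]]] : exists p r, zip (x :: s) (rcons s x) = p :: r /\ size r = size s.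
  case: s hu hw => [|y s'] _ _; first by exists (x, x), [::].
  exists (x, y), (zip (y :: s') (rcons s' x)); split => //.
  by rewrite size_zip size_rcons minnn.
have hcrit : circ n a p.1 p.2 = lam.
  apply: (@crit_first _ _ (fun q : 'I_n * 'I_n => circ n a q.1 q.2) lam p r hF lam0); rewrite -hz.
  by rewrite hr.
pose c := fun k => lam^-1 * a k.
have HB : forall i j : 'I_n, (lam^-1 *: circ n a) i j = c ((j + n - i) %% n)%N.
  by move=> i j; rewrite !mxE.
have Hc : forall k, (k < n)%N -> 0 <= c k.
  by move=> k hk; rewrite /c mulr_ge0 ?invr_ge0 ?ha.
have Hc1 : forall k, (k < n)%N -> c k <= 1.
  by move=> k hk; rewrite /c ler_pdivrMl // mulr1 hle.
pose s0 : 'I_n := Ordinal (ltn_pmod (p.2 + n - p.1) n0).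
have Hs0 : c s0 = 1.
  by move: hcrit; rewrite mxE /c /= => ->; rewrite mulVf // gt_eqF.
have hper : periodic_from (fun t => mx_pow (lam^-1 *: circ n a) t) ((n - 1) ^ 2 + 1).
  exists n; split => // t ht.
  apply: (period n0 HB Hc Hc1 Hs0).
  move: ht; rewrite -subn1 expnS expn1; nia.
split; first by exists ((n - 1) ^ 2 + 1)%N; split => //; rewrite addn1.
by move=> T [_ [_ hmin]]; apply: hmin => //; rewrite addn1.
Qed.
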